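(* Let $\alpha\in\mathbb N=\{1,2,\ldots\}$ and define the real-valued measure $$\mu_\alpha=(1-q^\alpha)\sum_{k=0}^\infty q^{\alpha k}\delta_{q^k/\phi}.$$ Then $\mu_\alpha$ has total mass $1$ and for every $n\ge 0$, $$\int x^n\,d\mu_\alpha(x)=\frac{F_\alpha}{F_{\alpha+n}}.$$ Moreover $\mu_\alpha$ is a positive (probability) measure when $\alpha$ is even. In particular, $(1/F_{n+2})_{n\ge 0}$ is the moment sequence of the probability measure $\mu_2=(1-q^2)\sum_{k\ge 0}q^{2k}\delta_{q^k/\phi}$.
   Context: $F_n$ denotes the Fibonacci numbers: $F_0=0$, $F_1=1$, $F_{n+1}=F_n+F_{n-1}$. $\phi=(1+\sqrt5)/2$ and $q=(1-\sqrt5)/(1+\sqrt5)=1/\phi-1$, so $-1<q<0$. $\delta_a$ denotes the unit point mass at $a$. *)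

(* Defs.v *)
From Stdlib Require Import Reals Lra Lia ClassicalEpsilon.
From Coquelicot Require Import Coquelicot.
Open Scope R_scope.

Fixpoint fib (n : nat) : nat :=
  match n with
  | O => O
  | S m => match m with
           | O => 1%nat
           | S p => (fib m + fib p)%nat
           end
  end.

Definition phi : R := (1 + sqrt 5) / 2.
Definition q : R := (1 - sqrt 5) / (1 + sqrt 5).

(* mu_alpha = (1 - q^alpha) sum_k q^(alpha k) delta_{q^k/phi}:
   weight and location of the k-th atom. *)
Definition mu_weight (alpha k : nat) : R := (1 - q ^ alpha) * q ^ (alpha * k).
Definition mu_atom (k : nat) : R := q ^ k / phi.

Definition mu (alpha : nat) (A : R -> Prop) : R :=
  Series (fun k => if excluded_middle_informative (A (mu_atom k))
                   then mu_weight alpha k else 0).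

(* The terms of  \int f d mu_alpha = sum_k w_k f(x_k). *)
Definition mu_int_terms (alpha : nat) (f : R -> R) (k : nat) : R :=
  mu_weight alpha k * f (mu_atom k).

(* Main.v *)
Require Import Defs.
From Stdlib Require Import Reals Lra Lia ClassicalEpsilon.
From Coquelicot Require Import Coquelicot.
From Stdlib Require Import Arith Wf_nat.
Open Scope R_scope.

Definition psi : R := (1 - sqrt 5) / 2.

Lemma s5 : sqrt 5 * sqrt 5 = 5.
Proof. apply sqrt_sqrt; lra. Qed.

Lemma s5b : 2 < sqrt 5 < 3.
Proof.
  pose proof s5. pose proof (sqrt_pos 5). nra.
Qed.

Lemma binet m : INR (fib m) * sqrt 5 = phi ^ m - psi ^ m.
Proof.
  pose proof s5.
  assert (Hp : phi ^ 2 = phi + 1) by (unfold phi; simpl; nra).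
  assert (Hq : psi ^ 2 = psi + 1) by (unfold psi; simpl; nra).
  induction m as [m IH] using (well_founded_induction Wf_nat.lt_wf).
  destruct m as [|[|m]].
  - simpl. ring.
  - simpl. unfold phi, psi. field.
  - change (fib (S (S m))) with (fib (S m) + fib m)%nat.
    rewrite plus_INR, Rmult_plus_distr_r, IH, IH by lia.
    replace (phi ^ S (S m)) with (phi ^ 2 * phi ^ m) by (simpl; ring).
    replace (psi ^ S (S m)) with (psi ^ 2 * psi ^ m) by (simpl; ring).
    rewrite Hp, Hq. simpl. ring.
Qed.

Lemma q_eq : q = psi / phi.
Proof. unfold q, psi, phi. pose proof s5b. field. lra. Qed.

Lemma phi_pos : 0 < phi.
Proof. unfold phi. pose proof s5b. lra. Qed.

Lemma fib_q m : INR (fib m) * sqrt 5 = phi ^ m * (1 - q ^ m).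
Proof.
  rewrite binet, q_eq. pose proof phi_pos.
  unfold Rdiv. rewrite Rpow_mult_distr, pow_inv.
  field. apply pow_nonzero; lra.
Qed.

Lemma q_bounds : -1 < q < 0.
Proof.
  unfold q. pose proof s5b. split.
  - apply Rmult_lt_reg_r with (1 + sqrt 5); [lra|].
    field_simplify; lra.
  - apply Rmult_lt_reg_r with (1 + sqrt 5); [lra|].
    field_simplify; lra.
Qed.

Lemma abs_qpow m : (1 <= m)%nat -> Rabs (q ^ m) < 1.
Proof.
  intros Hm. rewrite <- RPow_abs. pose proof q_bounds.
  assert (0 <= Rabs q < 1) by (rewrite Rabs_left by lra; lra).
  apply pow_lt_1_compat; [assumption|lia].
Qed.

Lemma moments alpha n : (1 <= alpha)%nat ->
  is_series (mu_int_terms alpha (fun x => x ^ n))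
            (INR (fib alpha) / INR (fib (alpha + n))).
Proof.
  intros Ha. pose proof phi_pos.
  assert (Hg := is_series_geom (q ^ (alpha + n)) (abs_qpow (alpha + n) ltac:(lia))).
  assert (Hs := is_series_scal ((1 - q ^ alpha) / phi ^ n) _ _ Hg).
  assert (Hne : 1 - q ^ (alpha + n) <> 0).
  { pose proof (abs_qpow (alpha + n) ltac:(lia)) as H1.
    apply Rabs_def2 in H1. lra. }
  assert (Hpn : phi ^ n <> 0) by (apply pow_nonzero; lra).
  assert (Hpa : phi ^ alpha <> 0) by (apply pow_nonzero; lra).
  assert (Hs5 : sqrt 5 <> 0) by (pose proof s5b; lra).
  replace (INR (fib alpha) / INR (fib (alpha + n)))
    with (scal ((1 - q ^ alpha) / phi ^ n) (/ (1 - q ^ (alpha + n)))).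
  2:{ unfold scal; simpl; unfold mult; simpl.
      assert (E : INR (fib alpha) / INR (fib (alpha + n)) =
                  (INR (fib alpha) * sqrt 5) / (INR (fib (alpha + n)) * sqrt 5))
        by (field; split; auto; intro H0; pose proof (fib_q (alpha+n)) as F;
            rewrite H0 in F; rewrite pow_add in F;
            apply (Rmult_integral_contrapositive_currified _ _
              (Rmult_integral_contrapositive_currified _ _ Hpa Hpn) Hne); lra).
      rewrite E, !fib_q, (pow_add phi). field. auto. }
  eapply is_series_ext; [|exact Hs].
  intros k. unfold mu_int_terms, mu_weight, mu_atom, scal; simpl.
  unfold mult; simpl.
  unfold Rdiv. rewrite Rpow_mult_distr, pow_inv.
  replace (alpha * k)%nat with (k * alpha)%nat by lia.
  rewrite <- !pow_mult, Nat.mul_add_distr_r, pow_add. replace (k * alpha)%nat with (alpha * k)%nat by lia. replace (k * n)%nat with (n * k)%nat by lia. ring.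
Qed.

Lemma weights alpha : (1 <= alpha)%nat -> is_series (fun k => mu_weight alpha k) 1.
Proof.
  intros Ha. pose proof (moments alpha 0 Ha) as H.
  rewrite Nat.add_0_r in H.
  assert (Hf : INR (fib alpha) <> 0).
  { intro H0. pose proof (fib_q alpha) as F. rewrite H0 in F.
    pose proof phi_pos. pose proof (abs_qpow alpha Ha) as Hq1.
    apply Rabs_def2 in Hq1.
    assert (phi ^ alpha > 0) by (apply pow_lt; lra). nra. }
  replace 1 with (INR (fib alpha) / INR (fib alpha)) by (field; auto).
  eapply is_series_ext; [|exact H].
  intros k. unfold mu_int_terms. simpl. ring.
Qed.

Lemma mass alpha : (1 <= alpha)%nat -> mu alpha (fun _ => True) = 1.
Proof.
  intros Ha. unfold mu. apply is_series_unique.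
  eapply is_series_ext; [|exact (weights alpha Ha)].
  intros k. simpl. destruct (excluded_middle_informative True); tauto.
Qed.

Lemma pos alpha : (1 <= alpha)%nat -> Nat.Even alpha ->
  forall A : R -> Prop, 0 <= mu alpha A.
Proof.
  intros Ha [m Hm] A.
  assert (Hw : forall k, 0 <= mu_weight alpha k).
  { intros k. unfold mu_weight. subst alpha.
    pose proof (abs_qpow (2 * m) Ha) as H1. apply Rabs_def2 in H1.
    apply Rmult_le_pos; [lra|].
    rewrite <- Nat.mul_assoc, pow_mult. apply pow_le.
    simpl. nra. }
  unfold mu.
  set (t := fun k => if excluded_middle_informative (A (mu_atom k))
                   then mu_weight alpha k else 0).
  assert (Ht : forall k, 0 <= t k <= mu_weight alpha k).
  { intros k. unfold t. destruct excluded_middle_informative; split;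
    try lra; apply Hw. }
  assert (Hex : ex_series t).
  { apply (@ex_series_le R_AbsRing R_CompleteNormedModule) with (b := fun k => mu_weight alpha k).
    - intros k. change (norm (t k)) with (Rabs (t k)).
      rewrite Rabs_right by (destruct (Ht k); lra). apply Ht.
    - eexists. apply (weights alpha Ha). }
  assert (H0 : Series (fun n => 0 * t n) = 0).
  { rewrite Series_scal_l. ring. }
  rewrite <- H0. apply Series_le; auto.
  intros k. destruct (Ht k); split; lra.
Qed.

Theorem mainTheorem2 :
  (forall alpha : nat, (1 <= alpha)%nat ->
     (* total mass 1 *)
     is_series (fun k => mu_weight alpha k) 1 /\
     mu alpha (fun _ => True) = 1 /\
     (* moments *)
     (forall n : nat,
        is_series (mu_int_terms alpha (fun x => x ^ n))
                  (INR (fib alpha) / INR (fib (alpha + n))))) /\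
  (* positivity for even alpha *)
  (forall alpha : nat, (1 <= alpha)%nat -> Nat.Even alpha ->
     forall A : R -> Prop, 0 <= mu alpha A) /\
  (* in particular: (1/F_{n+2}) is the moment sequence of the probability mu_2 *)
  ((forall A : R -> Prop, 0 <= mu 2 A) /\ mu 2 (fun _ => True) = 1 /\
   forall n : nat,
     is_series (mu_int_terms 2 (fun x => x ^ n)) (1 / INR (fib (n + 2)))).
Proof.
  split; [|split; [|split; [|split]]].
  - intros alpha Ha. split; [apply weights; auto|split; [apply mass; auto|]].
    intros n. apply moments; auto.
  - exact pos.
  - apply pos; [lia|exists 1%nat; reflexivity].
  - apply mass; lia.
  - intros n. rewrite Nat.add_comm. exact (moments 2 n ltac:(lia)).
Qed.
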